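(* Let $x<w$ in $W$ and let $\mathfrak w=s_1\cdots s_n$ be a reduced word of $w$ which is a good word for $x$ and satisfies $\lambda_{x,\mathfrak w}=\lambda(\mathscr C^-_{x,\mathfrak w})^*=(i_1,\ldots,i_d)$ with $i_1=1$. Write $s_i=s_{\alpha_i}$ with $\alpha_i$ simple. Then: (i) $x<s_1x$; (ii) $S(x,s_1w)=S(x,w)\setminus\{\gamma_1\}$, where $\gamma_1=s_n\cdots s_2\alpha_1$; (iii) $s_1\mathfrak w=s_2\cdots s_n$ is a good word of $s_1w$ for $x$; (iv) $\lambda_{x,s_1\mathfrak w}=(i_2-1,\ldots,i_d-1)=\lambda(\mathscr C^-_{x,s_1\mathfrak w})^*$ (positions in $s_2\cdots s_n$ numbered $1,\ldots,n-1$).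
   Context: Let $W$ be the Weyl group of a finite reduced root system $\Phi$ with positive roots $\Phi_+$ and simple reflections $S$, length $\ell$, Bruhat order $\le$. For $x\le w$, $S(x,w)=\{\alpha\in\Phi_+: x\le ws_\alpha<w\}$. For a reduced word $\mathfrak w=s_1\cdots s_n$ of $w$, $\lambda_{x,\mathfrak w}$ is the set of $i$ with $x\le s_1\cdots\widehat{s_i}\cdots s_n$, written as an increasing tuple $(i_1,\ldots,i_d)$; $\mathfrak w$ is a good word for $x$ if $x=s_1\cdots\widehat{s_{i_1}}\cdots\widehat{s_{i_d}}\cdots s_n$. Maximal chains $w=w_0\to\cdots\to w_d=x$ of covers in $[x,w]$ are labeled by $\lambda(\mathscr C)=(i_1,\ldots,i_d)$, where $w_k$ is obtained from $\mathfrak w$ by deleting $s_{i_1},\ldots,s_{i_k}$; $\mathscr C^-_{x,\mathfrak w}$ denotes the unique maximal chain with strictly decreasing label (which is lexicographically largest, by Björner–Wachs shellability). For a tuple $\lambda=(a_1,\ldots,a_d)$, $\lambda^*=(a_d,\ldots,a_1)$. *)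

(* Defs.v *)
From HB Require Import structures.
From mathcomp Require Import all_boot all_order all_algebra.
Set Implicit Arguments. Unset Strict Implicit. Unset Printing Implicit Defensive.
Import Order.TTheory GRing.Theory Num.Theory.
Local Open Scope ring_scope.

(* The Weyl group W is realised as a group of m x m matrices acting on the left
   on column vectors; its elements are products of simple reflections. *)

Section RootSystem.
Variables (R : realFieldType) (m : nat).

Definition dot (u v : 'cV[R]_m) : R := (u^T *m v) 0 0.

Definition refl (a : 'cV[R]_m) : 'M[R]_m :=
  1%:M - (2 / dot a a) *: (a *m a^T).

Definition root_system (Phi : seq 'cV[R]_m) : Prop :=
  [/\ (0 : 'cV[R]_m) \notin Phi,
      (forall v : 'cV[R]_m, (forall a, a \in Phi -> dot a v = 0) -> v = 0),
      (forall a b, a \in Phi -> b \in Phi -> refl a *m b \in Phi),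
      (forall a b, a \in Phi -> b \in Phi ->
          exists z : int, 2 * dot a b / dot a a = z%:~R) &
      (forall a (c : R), a \in Phi -> c *: a \in Phi -> c = 1 \/ c = -1)].

(* t is regular: it determines the positive system Phi_+ = {a | (t,a) > 0}. *)
Definition regular (Phi : seq 'cV[R]_m) (t : 'cV[R]_m) : Prop :=
  forall a, a \in Phi -> dot t a != 0.

Variables (Phi : seq 'cV[R]_m) (t : 'cV[R]_m).

Definition posroot (a : 'cV[R]_m) : bool := (a \in Phi) && (0 < dot t a).

Definition posroots : seq 'cV[R]_m := [seq a <- Phi | posroot a].

Definition simple (a : 'cV[R]_m) : bool :=
  posroot a && ~~ has (fun b => has (fun c => a == b + c) posroots) posroots.

(* a word is a sequence of simple roots alpha_1 ... alpha_n, standing for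
   s_{alpha_1} ... s_{alpha_n} *)
Definition is_word (s : seq 'cV[R]_m) : bool := all simple s.

Definition wprod (s : seq 'cV[R]_m) : 'M[R]_m :=
  foldr (fun a M => refl a *m M) 1%:M s.

Definition in_W (w : 'M[R]_m) : Prop := exists s, is_word s /\ wprod s = w.

Definition length_is (w : 'M[R]_m) (k : nat) : Prop :=
  (exists s, [/\ is_word s, size s = k & wprod s = w]) /\
  (forall s, is_word s -> wprod s = w -> (k <= size s)%N).

Definition bstep (u v : 'M[R]_m) : Prop :=
  exists b, [/\ b \in Phi, v = u *m refl b &
    exists p q, [/\ length_is u p, length_is v q & (p < q)%N]].

Inductive bruhat_le (x : 'M[R]_m) : 'M[R]_m -> Prop :=
| bruhat_refl : in_W x -> bruhat_le x x
| bruhat_next u v : bruhat_le x u -> bstep u v -> bruhat_le x v.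

Definition bruhat_lt (u v : 'M[R]_m) : Prop := bruhat_le u v /\ u <> v.

Definition covered (u v : 'M[R]_m) : Prop :=
  bruhat_lt u v /\ exists p, length_is u p /\ length_is v p.+1.

Definition inS (x w : 'M[R]_m) (b : 'cV[R]_m) : Prop :=
  [/\ posroot b, bruhat_le x (w *m refl b) & bruhat_lt (w *m refl b) w].

Definition reduced_word (s : seq 'cV[R]_m) (w : 'M[R]_m) : Prop :=
  [/\ is_word s, wprod s = w & length_is w (size s)].

(* delete the letters at the (1-based) positions in l *)
Definition del_set (l : seq nat) (s : seq 'cV[R]_m) : seq 'cV[R]_m :=
  mask [seq j \notin l | j <- iota 1 (size s)] s.

(* lam_spec x s l  <->  l = lambda_{x,s} (increasing tuple, positions 1..n) *)
Definition lam_spec (x : 'M[R]_m) (s : seq 'cV[R]_m) (l : seq nat) : Prop :=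
  sorted ltn l /\
  forall i, i \in l <-> ((1 <= i <= size s)%N /\ bruhat_le x (wprod (del_set [:: i] s))).

Definition good_word (x : 'M[R]_m) (s : seq 'cV[R]_m) : Prop :=
  exists l, lam_spec x s l /\ x = wprod (del_set l s).

(* chain_label x s mu  <->  mu = (j_1,...,j_d) is the label of a maximal chain
   w = w_0 -> w_1 -> ... -> w_d = x of covers, where w_k is obtained from the
   word s by deleting the letters at positions j_1,...,j_k. *)
Definition chain_label (x : 'M[R]_m) (s : seq 'cV[R]_m) (mu : seq nat) : Prop :=
  [/\ uniq mu, all (fun j => 1 <= j <= size s)%N mu,
      (forall k, (0 < k <= size mu)%N ->
         covered (wprod (del_set (take k mu) s)) (wprod (del_set (take k.-1 mu) s))) &
      wprod (del_set mu s) = x].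

End RootSystem.

(* Main.v *)
Require Import Defs.
From HB Require Import structures.
From mathcomp Require Import all_boot all_order all_algebra.
From mathcomp Require Import ring lra zify.
From Stdlib Require Import Classical_Prop.
Import Order.TTheory GRing.Theory Num.Theory.
Local Open Scope ring_scope.
Set Implicit Arguments. Unset Strict Implicit. Unset Printing Implicit Defensive.

Section Alg.
Variables (R : realFieldType) (m : nat).
Implicit Types (u v a b c : 'cV[R]_m) (g M : 'M[R]_m).

Lemma dotE u v : dot u v = \sum_i u i 0 * v i 0.
Proof. by rewrite /dot mxE; apply: eq_bigr => i _; rewrite mxE. Qed.

Lemma dotC u v : dot u v = dot v u.
Proof. by rewrite !dotE; apply: eq_bigr => i _; rewrite mulrC. Qed.

Lemma dotDr u v c : dot u (v + c) = dot u v + dot u c.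
Proof. by rewrite /dot mulmxDr mxE. Qed.

Lemma dotZr u v (k : R) : dot u (k *: v) = k * dot u v.
Proof. by rewrite /dot -scalemxAr mxE. Qed.

Lemma dotNr u v : dot u (- v) = - dot u v.
Proof. by rewrite -scaleN1r dotZr mulN1r. Qed.

Lemma dotBr u v c : dot u (v - c) = dot u v - dot u c.
Proof. by rewrite dotDr dotNr. Qed.

Lemma dotDl u v c : dot (v + c) u = dot v u + dot c u.
Proof. by rewrite dotC dotDr !(dotC u). Qed.

Lemma dotZl u v (k : R) : dot (k *: v) u = k * dot v u.
Proof. by rewrite dotC dotZr dotC. Qed.

Lemma dotNl u v : dot (- v) u = - dot v u.
Proof. by rewrite dotC dotNr dotC. Qed.

Lemma dotBl u v c : dot (v - c) u = dot v u - dot c u.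
Proof. by rewrite dotDl dotNl. Qed.

Lemma dot_mull M u v : dot (M *m u) v = dot u (M^T *m v).
Proof. by rewrite /dot trmx_mul mulmxA. Qed.

Lemma dot_orth g u v : g^T *m g = 1%:M -> dot (g *m u) (g *m v) = dot u v.
Proof. by move=> H; rewrite dot_mull mulmxA H mul1mx. Qed.

Lemma dot_ge0 u : 0 <= dot u u.
Proof. by rewrite dotE; apply: sumr_ge0 => i _; rewrite -expr2 sqr_ge0. Qed.

Lemma dot_eq0 u : (dot u u == 0) = (u == 0).
Proof.
apply/idP/eqP => [|->]; last by rewrite dotE big1 // => i _; rewrite mxE mul0r.
rewrite dotE psumr_eq0 => [/allP H|i _]; last by rewrite -expr2 sqr_ge0.
apply/matrixP => i j; rewrite (ord1 j) mxE.
by have := H i (mem_index_enum _); rewrite -expr2 sqrf_eq0 => /eqP.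
Qed.

Lemma dot_gt0 u : u != 0 -> 0 < dot u u.
Proof. by move=> H; rewrite lt_def dot_ge0 dot_eq0 H. Qed.

Lemma mul_outer u v : (u *m u^T) *m v = dot u v *: u.
Proof.
by rewrite -mulmxA [u^T *m v]mx11_scalar mul_mx_scalar.
Qed.

Lemma reflE a v : refl a *m v = v - (2 * dot a v / dot a a) *: a.
Proof.
rewrite /refl mulmxBl mul1mx -scalemxAl mul_outer scalerA.
by congr (_ - _ *: _); rewrite mulrC mulrA [_ * 2]mulrC.
Qed.

Lemma refl_tr a : (refl a)^T = refl a.
Proof. by rewrite /refl linearB /= trmx1 linearZ /= trmx_mul trmxK. Qed.

Lemma refl_invol a : a != 0 -> refl a *m refl a = 1%:M.
Proof.
move=> a0; have ha := dot_gt0 a0; rewrite /refl.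
set P := a *m a^T; set k := 2 / dot a a.
have PP : P *m P = dot a a *: P by rewrite mulmxA mul_outer -scalemxAl.
rewrite mulmxBl mul1mx mulmxBr mulmx1 -scalemxAr -scalemxAl PP !scalerA.
have -> : k * k * dot a a = k + k.
  by rewrite /k; field; rewrite gt_eqF.
by rewrite scalerDl opprB addrK subrK.
Qed.


Lemma refl_conj g a : g^T *m g = 1%:M -> g *m refl a *m g^T = refl (g *m a).
Proof.
move=> H; have H' := mulmx1C H.
rewrite /refl dot_orth // mulmxBr mulmx1 mulmxBl H' -scalemxAr -scalemxAl.
by rewrite trmx_mul !mulmxA.
Qed.

Lemma refl_self a : a != 0 -> refl a *m a = - a.
Proof.
move=> a0; rewrite reflE.
have -> : 2 * dot a a / dot a a = 1 + 1 by field; rewrite dot_eq0.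
by rewrite scalerDl scale1r opprD addrA subrr sub0r.
Qed.

Lemma reflN a : refl (- a) = refl a.
Proof.
by rewrite /refl dotNl dotNr opprK linearN /= mulNmx mulmxN opprK.
Qed.

End Alg.

Section Words.
Variables (R : realFieldType) (m : nat).
Implicit Types (u v : seq 'cV[R]_m).

Lemma wprod_cons (c : 'cV[R]_m) u : wprod (c :: u) = refl c *m wprod u.
Proof. by []. Qed.

Lemma wprod_cat u v : wprod (u ++ v) = wprod u *m wprod v.
Proof. by elim: u => [|c u IH] /=; rewrite ?mul1mx // IH mulmxA. Qed.

Lemma wprod_tr u : (wprod u)^T = wprod (rev u).
Proof.
elim: u => [|c u IH]; first by rewrite /= trmx1.
by rewrite wprod_cons trmx_mul IH refl_tr rev_cons -cats1 wprod_cat /= mulmx1.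
Qed.

Lemma wprod_orth u : all (fun c => c != 0) u -> (wprod u)^T *m wprod u = 1%:M.
Proof.
elim: u => [|c u IH] /=; first by rewrite trmx1 mul1mx.
case/andP => c0 /IH H.
by rewrite trmx_mul refl_tr -mulmxA (mulmxA (refl c)) refl_invol // mul1mx.
Qed.

Lemma wprod_orth' u : all (fun c => c != 0) u -> wprod u *m (wprod u)^T = 1%:M.
Proof. by move/wprod_orth/mulmx1C. Qed.

End Words.

Section Del.
Variables (R : realFieldType) (m : nat).
Implicit Types (u : seq 'cV[R]_m) (L : seq nat).

Lemma nat_L1 n k p : (k <= n)%N -> p.+1 = (n.+1 - k)%N -> (n.+1 - k.+1)%N = p.
Proof. lia. Qed.
Lemma nat_L2 n k q : (k <= n)%N -> (q <= n - k)%N -> (n.+1 - k <= q.+1)%N -> q = (n - k)%N.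
Proof. lia. Qed.

Lemma nat_L3 n k : (0 < k)%N -> (k <= n)%N -> (n - k < n - k.-1)%N.
Proof. lia. Qed.
Lemma nat_L4 n k : (0 < k)%N -> (k <= n)%N -> (n - k.-1 = (n - k).+1)%N.
Proof. lia. Qed.

Lemma eq_del_set L L' u : (forall j, (0 < j)%N -> (j \in L) = (j \in L')) ->
  del_set L u = del_set L' u.
Proof.
move=> H; rewrite /del_set; congr (mask _ _); apply/eq_in_map => j.
by rewrite mem_iota => /andP[j1 _]; rewrite H.
Qed.

Lemma map_true_iota k n : [seq true | _ <- iota k n] = nseq n true.
Proof. by elim: n k => //= n IH k; rewrite IH. Qed.

Lemma del_set_nil u : del_set [::] u = u.
Proof.
rewrite /del_set (eq_map (g := fun=> true)) //.
by rewrite map_true_iota mask_true.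
Qed.

Lemma del_set_cons L (c : 'cV[R]_m) u : del_set L (c :: u) =
  if 1%N \in L then del_set [seq i.-1 | i <- L] u else c :: del_set [seq i.-1 | i <- L] u.
Proof.
rewrite /del_set /= -(addn1 1) iotaDl -map_comp.
have -> : [seq ((fun j : nat => j \notin L) \o addn 1) i | i <- iota 1 (size u)] =
          [seq j \notin [seq i.-1 | i <- L] | j <- iota 1 (size u)].
  apply/eq_in_map => j; rewrite mem_iota => /andP[j1 _] /=.
  rewrite add1n; congr negb; apply/idP/mapP => [H | [i iL Ej]]; first by exists j.+1.
  by rewrite Ej prednK // lt0n; apply: contraTneq j1 => E; rewrite Ej E.
by case: (1%N \in L).
Qed.

Lemma size_del_set L u : uniq L -> all (fun j => (1 <= j <= size u)%N) L ->
  size (del_set L u) = (size u - size L)%N.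
Proof.
move=> uL /allP aL; rewrite /del_set size_mask ?size_map ?size_iota //.
rewrite count_map.
have E := count_predC (mem L) (iota 1 (size u)).
have E2 : count (mem L) (iota 1 (size u)) = size L.
  rewrite -size_filter; apply: perm_size; apply: uniq_perm.
  - exact: filter_uniq (iota_uniq _ _).
  - exact: uL.
  move=> j; rewrite mem_filter mem_iota; apply/andP/idP => [[]//|jL].
  by split => //; have := aL _ jL; rewrite addnC addn1 ltnS.
rewrite size_iota E2 in E.
have -> : (size u - size L = count (predC (mem L)) (iota 1 (size u)))%N.
  by rewrite -{1}E addKn.
by apply: eq_count => j.
Qed.

End Del.

Section RS.
Variables (R : realFieldType) (m : nat) (Phi : seq 'cV[R]_m) (t : 'cV[R]_m).
Hypotheses (HPhi : root_system Phi) (Ht : regular Phi t).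
Implicit Types (a b c : 'cV[R]_m) (u v : seq 'cV[R]_m).
Implicit Types (w x y g : 'M[R]_m).

Lemma root_nz a : a \in Phi -> a != 0.
Proof. by case: HPhi => H0 _ _ _ _ aP; apply: contraNneq H0 => <-. Qed.

Lemma root_refl a b : a \in Phi -> b \in Phi -> refl a *m b \in Phi.
Proof. by case: HPhi => _ _ H _ _; apply: H. Qed.

Lemma rootN a : a \in Phi -> - a \in Phi.
Proof. by move=> aP; rewrite -refl_self ?root_nz // root_refl. Qed.

Lemma root_int a b : a \in Phi -> b \in Phi -> exists z : int, 2 * dot a b / dot a a = z%:~R.
Proof. by case: HPhi => _ _ _ H _; apply: H. Qed.

Lemma root_red a (k : R) : a \in Phi -> k *: a \in Phi -> k = 1 \/ k = -1.
Proof. by case: HPhi => _ _ _ _ H; apply: H. Qed.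

Lemma root_sign a : a \in Phi -> (dot t a < 0) \/ (0 < dot t a).
Proof.
move=> aP; have := Ht aP; rewrite neq_lt => /orP[]; by [left|right].
Qed.

Lemma posrootP a : posroot Phi t a = (a \in Phi) && (0 < dot t a).
Proof. by []. Qed.

Lemma pos_of a : a \in Phi -> ~~ (dot t a < 0) -> posroot Phi t a.
Proof.
move=> aP; rewrite posrootP aP /=; case: (root_sign aP) => H; by rewrite H.
Qed.

Lemma posN a : a \in Phi -> dot t a < 0 -> posroot Phi t (- a).
Proof. by move=> aP H; rewrite posrootP rootN // dotNr oppr_gt0. Qed.

Lemma simple_pos a : simple Phi t a -> posroot Phi t a.
Proof. by case/andP. Qed.

Lemma simple_in a : simple Phi t a -> a \in Phi.
Proof. by case/simple_pos/andP. Qed.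

Lemma simple_decomp a b c : simple Phi t a -> posroot Phi t b -> posroot Phi t c ->
  a <> b + c.
Proof.
case/andP => _ /hasPn H bP cP E.
have /H : b \in posroots Phi t by rewrite mem_filter bP; case/andP: bP.
move=> /hasPn /(_ c); rewrite mem_filter cP.
by case/andP: cP => -> _ /(_ isT); rewrite E eqxx.
Qed.


Lemma root_CS a b : a \in Phi -> b \in Phi -> a != b -> a != - b ->
  dot a b ^+ 2 < dot a a * dot b b.
Proof.
move=> aP bP ab abN.
have hb := dot_gt0 (root_nz bP).
set v := dot b b *: a - dot a b *: b.
have Ev : dot v v = dot b b * (dot a a * dot b b - dot a b ^+ 2).
  rewrite /v !(dotBl, dotBr, dotZl, dotZr) (dotC b a); ring.
have D0 : 0 <= dot a a * dot b b - dot a b ^+ 2.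
  by rewrite -(pmulr_rge0 _ hb) -Ev dot_ge0.
rewrite -subr_gt0 lt_def D0 andbT; apply/negP => /eqP D.
have : v == 0 by rewrite -dot_eq0 Ev D mulr0.
rewrite subr_eq0 => /eqP Hv.
have Ea : a = (dot a b / dot b b) *: b.
  by rewrite mulrC -scalerA -Hv scalerA mulVf ?gt_eqF // scale1r.
have : (dot a b / dot b b) *: b \in Phi by rewrite -Ea.
case/(root_red bP) => E; rewrite E ?scale1r ?scaleN1r in Ea.
  by rewrite Ea eqxx in ab.
by rewrite Ea eqxx in abN.
Qed.

Lemma vecP (u v : 'cV[R]_m) : (forall i, u i 0 = v i 0) -> u = v.
Proof. by move=> H; apply/matrixP => i j; rewrite (ord1 j) H. Qed.

Lemma int_L1 (z : int) : (z <= 0%N%:Z)%R -> (0 < z)%R -> False.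
Proof. lia. Qed.
Lemma int_L2 (z z' : int) : (0 < z)%R -> (0 < z')%R -> (z * z' < 4)%R -> z = 1 \/ z' = 1.
Proof. lia. Qed.
Lemma int_L3 (z : int) (N : nat) : (z <= N.+1%:Z)%R -> (z - 2 <= N%:Z)%R.
Proof. lia. Qed.
Lemma int_L4 (z : int) : (z <= `|z|%N%:Z)%R.
Proof. lia. Qed.
Lemma int_L5 (z : int) : (0 < z)%R -> (1 <= z)%R.
Proof. lia. Qed.

Lemma two_nz : (1 + 1 : R) <> 1 /\ (1 + 1 : R) <> -1.
Proof. split; lra. Qed.

Lemma refl_simple_aux a : simple Phi t a -> forall (N : nat) b (z : int),
  posroot Phi t b -> b != a -> 2 * dot a b / dot a a = z%:~R -> (z <= N%:Z)%R ->
  0 < dot t (refl a *m b).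
Proof.
move=> aS; have aP := simple_in aS; have /andP[_ ta] := simple_pos aS.
have ha := dot_gt0 (root_nz aP).
have direct : forall b (z : int), posroot Phi t b -> 2 * dot a b / dot a a = z%:~R ->
    (z <= 0)%R -> 0 < dot t (refl a *m b).
  move=> b z /andP[_ tb] Hz Hz0; rewrite reflE Hz dotBr dotZr.
  have : z%:~R <= 0 :> R by rewrite lerz0.
  move=> H; nra.
elim=> [|N IH] b z bP ba Hz HzN; case: (lerP z 0) => Hz0; first by apply: direct Hz Hz0.
  by case: (int_L1 HzN Hz0).
  by apply: direct Hz Hz0.
have bPhi : b \in Phi by case/andP: bP.
have /andP[_ tb] := bP.
have rP : refl a *m b \in Phi by apply: root_refl.
case: (root_sign rP) => // Hr; exfalso.
have [z' Hz'] := root_int bPhi aP.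
have hb := dot_gt0 (root_nz bPhi).
have zr1 : 1 <= z%:~R :> R by rewrite ler1z; apply: int_L5.
have ab : 0 < dot a b.
  rewrite ltNge; apply/negP => H.
  have : 2 * dot a b / dot a a <= 0.
    have : 0 < (dot a a)^-1 by rewrite invr_gt0.
    move: (dot a a)^-1 => q Hq; nra.
  rewrite Hz; lra.
have z'1 : (0 < z')%R.
  rewrite -(ltr0z R) -Hz' dotC; apply: divr_gt0 => //; lra.
have zz : (z * z' < 4)%R.
  rewrite -(ltr_int R) intrM -Hz -Hz' -(ltr_pM2r (mulr_gt0 ha hb)).
  have ba' : b != - a.
    apply/eqP => E; move: tb; rewrite E dotNr; lra.
  have ab1 : a != b by rewrite eq_sym.
  have ab2 : a != - b by apply/eqP => E; move: ba'; rewrite E opprK eqxx.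
  have := root_CS aP bPhi ab1 ab2.
  have -> : 2 * dot a b / dot a a * (2 * dot b a / dot b b) * (dot a a * dot b b) =
            4 * dot a b ^+ 2.
    by rewrite (dotC b a); field; rewrite !gt_eqF.
  move=> H; apply: (lt_le_trans (y := 4 * (dot a a * dot b b))); first by lra.
  exact: lexx.
have [z1|z'1'] : z = 1 \/ z' = 1 by apply: int_L2.
  move: Hr rP; rewrite reflE Hz z1 scale1r => Hr rP.
  apply: (simple_decomp aS bP (posN rP Hr)).
  by apply: vecP => i; rewrite !mxE; ring.
have dP : a - b \in Phi.
  by move: (root_refl bPhi aP); rewrite reflE Hz' z'1' scale1r.
case: (root_sign dP) => Hd; last first.
  apply: (simple_decomp aS bP (pos_of dP _)).
    by rewrite -leNgt ltW.
  by apply: vecP => i; rewrite !mxE; ring.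
have b'P := posN dP Hd.
have b'a : - (a - b) != a.
  apply/eqP => E.
  have : (1 + 1) *: a \in Phi.
    suff -> : (1 + 1) *: a = b by [].
    by apply: vecP => i; move/matrixP: E => /(_ i 0); rewrite !mxE => E;
       rewrite mulrDl mul1r -{1}E; ring.
  by case/(root_red aP) => E2; [exact: (proj1 two_nz) E2 | exact: (proj2 two_nz) E2].
have Hz2 : 2 * dot a (- (a - b)) / dot a a = (z - 2)%:~R.
  by rewrite intrB -Hz dotNr dotBr; field; rewrite gt_eqF.
have := IH _ _ b'P b'a Hz2 (int_L3 HzN).
set g := refl a *m - (a - b) => Hg.
have gP : posroot Phi t g by rewrite posrootP Hg andbT root_refl // rootN.
move: Hr rP; set r := refl a *m b => Hr rP.
apply: (simple_decomp aS gP (posN rP Hr)).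
rewrite /g /r !reflE Hz Hz2 intrB.
by apply: vecP => i; rewrite !mxE; ring.
Qed.

Lemma refl_simple_pos a b : simple Phi t a -> posroot Phi t b -> b != a ->
  0 < dot t (refl a *m b).
Proof.
move=> aS bP ba; have [z Hz] := root_int (simple_in aS) (proj1 (andP bP)).
by apply: (refl_simple_aux aS (N := `|z|%N) bP ba Hz); apply: int_L4.
Qed.



Lemma word_nz u : is_word Phi t u -> all (fun c => c != 0) u.
Proof.
move/allP => H; apply/allP => c /H cS; exact: root_nz (simple_in cS).
Qed.

Lemma word_orth u : is_word Phi t u -> (wprod u)^T *m wprod u = 1%:M.
Proof. by move/word_nz/wprod_orth. Qed.

Lemma word_orth' u : is_word Phi t u -> wprod u *m (wprod u)^T = 1%:M.
Proof. by move/word_nz/wprod_orth'. Qed.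

Lemma wprod_root u b : is_word Phi t u -> b \in Phi -> wprod u *m b \in Phi.
Proof.
elim: u => [|c u IH] /=; first by rewrite mul1mx.
case/andP => cS uW bP; rewrite -mulmxA; apply: root_refl (simple_in cS) (IH uW bP).
Qed.

Lemma exists_split u b : is_word Phi t u -> posroot Phi t b ->
  dot t (wprod u *m b) < 0 ->
  exists p c q, u = p ++ c :: q /\ wprod q *m b = c.
Proof.
move=> uW bP; have bPhi : b \in Phi by case/andP: bP.
elim: u uW => [|c u IH] /=.
  by rewrite mul1mx => _; case/andP: bP => _ H1 H2; move: H1; rewrite ltNge ltW.
case/andP => cS uW.
have uP := wprod_root uW bPhi.
case: (root_sign uP) => H.
  by case: (IH uW H) => p [c' [q [-> E]]] _; exists (c :: p), c', q.
move=> Hneg; exists [::], c, u; split => //.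
apply/eqP; apply: contraTT Hneg => ne.
rewrite -leNgt ltW // -mulmxA; apply: refl_simple_pos => //.
by rewrite posrootP uP H.
Qed.

Lemma del_refl p c q b : is_word Phi t (p ++ c :: q) -> wprod q *m b = c ->
  wprod (p ++ c :: q) *m refl b = wprod (p ++ q).
Proof.
rewrite /is_word all_cat => /andP[_ /andP[cS qW]] E.
have c0 : c != 0 := root_nz (simple_in cS).
have Eb : b = (wprod q)^T *m c by rewrite -E mulmxA word_orth // mul1mx.
have Hr : refl b = (wprod q)^T *m refl c *m wprod q.
  rewrite Eb -refl_conj ?trmxK //; exact: word_orth'.
rewrite Hr !wprod_cat wprod_cons -!mulmxA (mulmxA (wprod q)) word_orth' // mul1mx.
by rewrite (mulmxA (refl c)) refl_invol // mul1mx.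
Qed.

Lemma len_uniq w p q : length_is Phi t w p -> length_is Phi t w q -> p = q.
Proof.
move=> [[u [uW su wu]] Hp] [[v [vW sv wv]] Hq].
apply/eqP; rewrite eqn_leq; apply/andP; split.
  by rewrite -sv; apply: Hp.
by rewrite -su; apply: Hq.
Qed.

Lemma len_exists w : in_W Phi t w -> exists p, length_is Phi t w p.
Proof.
case=> u [uW wu].
suff H : forall n u, size u = n -> is_word Phi t u -> wprod u = w ->
   exists p, length_is Phi t w p by exact: H _ u erefl uW wu.
elim/ltn_ind => n IH {}u su {}uW {}wu.
case: (Classical_Prop.classic (exists v, [/\ is_word Phi t v, (size v < n)%N & wprod v = w])).
  by case=> v [vW sv wv]; apply: (IH _ sv v erefl vW wv).
move=> Hn; exists n; split; first by exists u.
move=> v vW wv; rewrite leqNgt; apply/negP => sv; apply: Hn; by exists v.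
Qed.

Lemma len_inW w p : length_is Phi t w p -> in_W Phi t w.
Proof. by case=> [[u [uW _ wu]] _]; exists u. Qed.

Lemma len_word w p : length_is Phi t w p -> exists u, [/\ is_word Phi t u, size u = p & wprod u = w].
Proof. by case. Qed.

Lemma len_le w p u : length_is Phi t w p -> is_word Phi t u -> wprod u = w -> (p <= size u)%N.
Proof. by case=> _ H; apply: H. Qed.

Lemma inW_orth w : in_W Phi t w -> w^T *m w = 1%:M.
Proof. by case=> u [uW <-]; apply: word_orth. Qed.

Lemma inW_orth' w : in_W Phi t w -> w *m w^T = 1%:M.
Proof. by case=> u [uW <-]; apply: word_orth'. Qed.

Lemma inW_root w b : in_W Phi t w -> b \in Phi -> w *m b \in Phi.
Proof. by case=> u [uW <-]; apply: wprod_root. Qed.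

Lemma inW_simple a w : simple Phi t a -> in_W Phi t w -> in_W Phi t (refl a *m w).
Proof. by move=> aS [u [uW <-]]; exists (a :: u); rewrite /is_word /= aS. Qed.

Lemma F5 w p b : length_is Phi t w p -> posroot Phi t b -> dot t (w *m b) < 0 ->
  exists q, length_is Phi t (w *m refl b) q /\ (q < p)%N.
Proof.
move=> Hw bP Hn; case: (len_word Hw) => u [uW su wu].
rewrite -wu in Hn; case: (exists_split uW bP Hn) => p1 [c [q1 [Eu Ec]]].
have W' : is_word Phi t (p1 ++ q1).
  by move: uW; rewrite Eu /is_word !all_cat => /andP[-> /andP[_ H]].
have Ew : w *m refl b = wprod (p1 ++ q1) by rewrite -wu Eu del_refl // -Eu.
have [q Hq] : exists q, length_is Phi t (w *m refl b) q.
  by apply: len_exists; exists (p1 ++ q1).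
exists q; split => //; have := len_le Hq W' (esym Ew).
by rewrite -su Eu !size_cat /= addnS => /leq_ltn_trans; apply.
Qed.

Lemma reflK b : b \in Phi -> refl b *m refl b = 1%:M.
Proof. by move=> bP; apply: refl_invol; apply: root_nz. Qed.

Lemma mulreflK w b : b \in Phi -> w *m refl b *m refl b = w.
Proof. by move=> bP; rewrite -mulmxA reflK // mulmx1. Qed.

Lemma F5' w p q b : length_is Phi t w p -> length_is Phi t (w *m refl b) q ->
  posroot Phi t b -> 0 < dot t (w *m b) -> (p < q)%N.
Proof.
move=> Hw Hwb bP Hp.
have bPhi : b \in Phi by case/andP: bP.
have Hn : dot t ((w *m refl b) *m b) < 0.
  by rewrite -mulmxA refl_self ?root_nz // mulmxN dotNr oppr_lt0.
case: (F5 Hwb bP Hn) => q' []; rewrite mulreflK // => Hq' lt.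
by rewrite (len_uniq Hw Hq').
Qed.
Implicit Types (z : 'M[R]_m).

Lemma bruhat_inW x z : bruhat_le Phi t x z -> in_W Phi t x.
Proof. by elim. Qed.

Lemma bstep_inW y z : bstep Phi t y z -> in_W Phi t y /\ in_W Phi t z.
Proof. by case=> b [_ _ [p [q [Hu Hv _]]]]; split; [apply: len_inW Hu|apply: len_inW Hv]. Qed.

Lemma bruhat_inW_r x z : bruhat_le Phi t x z -> in_W Phi t z.
Proof. by elim=> // y {}z _ _ /bstep_inW []. Qed.

Lemma bruhat_len x z : bruhat_le Phi t x z -> forall p q,
  length_is Phi t x p -> length_is Phi t z q -> (p <= q)%N /\ (p = q -> x = z).
Proof.
elim=> [xW | y {}z Hxu IH [b [bP Ev [p' [q' [Hu Hv lt]]]]]] p q Hp Hq.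
  by rewrite (len_uniq Hp Hq).
have [le _] := IH _ _ Hp Hu; rewrite (len_uniq Hq Hv).
have lt' := leq_ltn_trans le lt; split; first exact: ltnW.
by move=> E; rewrite E ltnn in lt'.
Qed.

Lemma bruhat_lt_len x z p q : bruhat_lt Phi t x z ->
  length_is Phi t x p -> length_is Phi t z q -> (p < q)%N.
Proof.
case=> Hle ne Hp Hq; have [le E] := bruhat_len Hle Hp Hq.
by rewrite ltn_neqAle le andbT; apply/eqP => /E.
Qed.

Lemma bstep_lt y z : bstep Phi t y z -> bruhat_lt Phi t y z.
Proof.
move=> Hs; have [uW _] := bstep_inW Hs; split; first exact: bruhat_next (bruhat_refl uW) Hs.
case: Hs => b [_ _ [p [q [Hu Hv lt]]]] E; rewrite E in Hu.
by rewrite (len_uniq Hu Hv) ltnn in lt.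
Qed.

Lemma covered_bstep y z : covered Phi t y z -> bstep Phi t y z.
Proof.
case=> [[Hle ne] [p [Hu Hv]]].
case: Hle ne Hu Hv => [|y' {}z Huu' Hs]; first by [].
move=> _ Hu Hv; have := Hs; case=> b [bP Ev [p' [q' [Hu' Hv' lt]]]].
rewrite (len_uniq Hv' Hv) ltnS in lt.
have [le E] := bruhat_len Huu' Hu Hu'.
have Ep : p = p' by apply/eqP; rewrite eqn_leq le lt.
by rewrite (E Ep).
Qed.

Lemma bstep_pos y z : bstep Phi t y z ->
  exists b, [/\ posroot Phi t b, z = y *m refl b & 0 < dot t (y *m b)].
Proof.
case=> b [bP Ev [p [q [Hu Hv lt]]]].
have [b' [b'P Eb]] : exists b', posroot Phi t b' /\ refl b' = refl b.
  case: (root_sign bP) => H; first by exists (- b); rewrite reflN posN.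
  by exists b; rewrite posrootP bP H.
exists b'; rewrite Eb; split => //.
have b'Phi : b' \in Phi by case/andP: b'P.
case: (root_sign (inW_root (len_inW Hu) b'Phi)) => // H.
case: (F5 Hu b'P H) => q' []; rewrite Eb -Ev => Hq'.
by rewrite (len_uniq Hq' Hv) => lt'; have := ltn_trans lt lt'; rewrite ltnn.
Qed.

Lemma lift a x z : simple Phi t a -> bstep Phi t x (refl a *m x) ->
  bruhat_le Phi t x z -> bruhat_le Phi t x (refl a *m z).
Proof.
move=> aS Hx; elim=> [xW | y {}z Hxu IH Hbs].
  exact: bruhat_next (bruhat_refl xW) Hx.
have [uW vW] := bstep_inW Hbs.
case: (bstep_pos Hbs) => b [bP Ev ub].
have bPhi : b \in Phi by case/andP: bP.
case: (eqVneq (y *m b) a) => [E | ne].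
  have Ha : refl a = y *m refl b *m y^T by rewrite -E refl_conj // inW_orth.
  rewrite Ha Ev -!mulmxA (mulmxA y^T) inW_orth // mul1mx.
  by rewrite reflK // mulmx1.
have ubP : posroot Phi t (y *m b) by rewrite posrootP inW_root.
have pos := refl_simple_pos aS ubP ne.
apply: bruhat_next IH _.
have [p1 Hp1] := len_exists (inW_simple aS uW).
have [q1 Hq1] := len_exists (inW_simple aS vW).
exists b; split => //; first by rewrite Ev mulmxA.
exists p1, q1; split => //; apply: (F5' Hp1 _ bP); last by rewrite -mulmxA.
by rewrite -mulmxA -Ev.
Qed.

Lemma lift_iff a x z : simple Phi t a -> bstep Phi t x (refl a *m x) ->
  bruhat_le Phi t x z <-> bruhat_le Phi t x (refl a *m z).
Proof.
move=> aS Hx; split; first exact: lift.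
move/(lift aS Hx); rewrite mulmxA reflK ?mul1mx //; exact: simple_in.
Qed.

Lemma word_del L u : is_word Phi t u -> is_word Phi t (del_set L u).
Proof. by move/allP => H; apply/allP => c /mem_mask /H. Qed.

Lemma word_rev u : is_word Phi t u -> is_word Phi t (rev u).
Proof. by rewrite /is_word all_rev. Qed.

Lemma inv_iff z p b : length_is Phi t z p -> posroot Phi t b ->
  bruhat_lt Phi t (z *m refl b) z <-> dot t (z *m b) < 0.
Proof.
move=> Hz bP; have bPhi : b \in Phi by case/andP: bP.
split.
  move=> Hlt; have [q Hq] := len_exists (bruhat_inW (proj1 Hlt)).
  have lt := bruhat_lt_len Hlt Hq Hz.
  case: (root_sign (inW_root (len_inW Hz) bPhi)) => // H.
  by have := F5' Hz Hq bP H => lt'; have := ltn_trans lt lt'; rewrite ltnn.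
move=> H; case: (F5 Hz bP H) => q [Hq lt].
apply: bstep_lt; exists b; split => //; first by rewrite mulreflK.
by exists q, p.
Qed.

Lemma sorted_ltn_eq (l1 l2 : seq nat) : sorted ltn l1 -> sorted ltn l2 -> l1 =i l2 -> l1 = l2.
Proof. by move=> s1 s2 E; apply: (irr_sorted_eq ltn_trans ltnn s1 s2 E). Qed.

Lemma main_lemma x w (s : seq 'cV[R]_m) (l : seq nat) :
  bruhat_lt Phi t x w ->
  reduced_word Phi t s w ->
  good_word Phi t x s ->
  lam_spec Phi t x s l ->
  chain_label Phi t x s (rev l) ->
  nth 0%N l 0 = 1%N ->
  let a1 := head 0 s in
  let gamma1 := wprod (rev (behead s)) *m a1 in
  let l' := [seq i.-1 | i <- behead l] in
  [/\ bruhat_lt Phi t x (refl a1 *m x),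
      (forall b, inS Phi t x (refl a1 *m w) b <-> (inS Phi t x w b /\ b <> gamma1)),
      reduced_word Phi t (behead s) (refl a1 *m w) /\ good_word Phi t x (behead s),
      lam_spec Phi t x (behead s) l' &
      chain_label Phi t x (behead s) (rev l')].
Proof.
move=> Hxw [sW Ews Lw] Hgood [lS lP] [ulr alr Hcov Hend] Hl1 a1 gamma1 l'.
rewrite {}/l' {}/gamma1 {}/a1.
case: l lS lP ulr alr Hcov Hend Hl1 => [|i1 l2] //= lS lP ulr alr Hcov Hend Hl1.
subst i1.
have one_l : (1 \in 1 :: l2)%N by rewrite inE eqxx.
case: s sW Ews Lw Hgood lP Hcov Hend alr => [|c s2] sW Ews Lw Hgood lP Hcov Hend alr.
  by case/lP: one_l => /andP[] /=.
rewrite /=.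
set n2 := size s2.
have cS : simple Phi t c by case/andP: sW.
have s2W : is_word Phi t s2 by case/andP: sW.
have cPhi := simple_in cS.
have l2gt : forall j, j \in l2 -> (1 < j)%N.
  move=> j; have := order_path_min ltn_trans lS => /allP H; exact: H.
have l2S : sorted ltn l2 := path_sorted lS.
have l2le : forall j, j \in l2 -> (j <= n2.+1)%N.
  move=> j jl; have jl' : j \in 1%N :: l2 by rewrite inE jl orbT.
  by have [/andP[_ ->]] := (lP j).1 jl'.
have memL' : forall j, (0 < j)%N -> (j \in [seq i.-1 | i <- l2]) = (j.+1 \in l2).
  move=> j j0; apply/mapP/idP => [[i il ->]|jl]; last by exists j.+1.
  by rewrite prednK // ltnW // l2gt.
have L'0 : forall j, j \in [seq i.-1 | i <- l2] -> (0 < j)%N.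
  by move=> j /mapP[i il ->]; rewrite -ltnS prednK ?l2gt // ltnW // l2gt.
set l' := [seq i.-1 | i <- l2] in memL' L'0 *.
have Hx : x = wprod (del_set l' s2).
  case: Hgood => l0 [[l0S l0P] Ex].
  have El0 : l0 = 1%N :: l2.
    apply: sorted_ltn_eq => // j; apply/idP/idP => H.
      by apply/(lP j); apply/(l0P j).
    by apply/(l0P j); apply/(lP j).
  rewrite Ex El0 del_set_cons inE eqxx /=; congr wprod; apply: eq_del_set => j j0.
  by rewrite inE (negbTE (lt0n_neq0 j0)).
have El2 : l2 = [seq i.+1 | i <- l'].
  symmetry; rewrite -map_comp; apply: map_id_in => j jl /=.
  by rewrite prednK //; exact: ltnW (l2gt _ jl).
have l'S : sorted ltn l'.
  have := l2S; rewrite El2 sorted_map; by apply: sub_sorted => a b.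
have ul' : uniq l' := sorted_uniq ltn_trans ltnn l'S.
have l'le : forall j, j \in l' -> (1 <= j <= n2)%N.
  move=> j jl; rewrite L'0 //= -ltnS; apply: l2le; rewrite -memL' //; exact: L'0.
have sl' : size l' = size l2 by rewrite size_map.
have sl2 : (size l2 <= n2)%N.
  have : (size (1%N :: l2) <= size (iota 1 n2.+1))%N.
    apply: uniq_leq_size; first by rewrite -rev_uniq.
    move=> j jl; move/allP: alr => /(_ j); rewrite mem_rev => /(_ jl).
    by rewrite mem_iota addnC addn1.
  by rewrite size_iota.
set U := fun k => wprod (del_set (take k (rev l')) s2).
set W := fun k => wprod (del_set (take k (rev (1%N :: l2))) (c :: s2)).
have WU : forall k, (k <= size l2)%N -> W k = refl c *m U k.
  move=> k kle; rewrite /W /U rev_cons -cats1 takel_cat ?size_rev //.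
  rewrite del_set_cons ifF; last first.
    by apply/negbTE/negP => /mem_take; rewrite mem_rev => /l2gt; rewrite ltnn.
  by rewrite wprod_cons map_take map_rev.
have Ew : w = refl c *m wprod s2 by rewrite -Ews.
have Ew' : refl c *m w = wprod s2 by rewrite Ew mulmxA reflK // mul1mx.
have Lw' : length_is Phi t (wprod s2) n2.
  split; first by exists s2.
  move=> v vW Ev; have cvW : is_word Phi t (c :: v) by apply/andP.
  have := len_le Lw cvW; rewrite wprod_cons Ev -Ew' mulmxA reflK // mul1mx.
  by move=> /(_ erefl).
have LW : forall k, (k <= (size l2).+1)%N -> length_is Phi t (W k) (n2.+1 - k).
  elim=> [|k IH] kle.
    by rewrite /W take0 del_set_nil Ews subn0.
  have := Hcov k.+1; rewrite size_rev /= => /(_ kle) [_ [p [Hp Hp1]]].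
  have := len_uniq Hp1 (IH (ltnW kle)); rewrite /W => Ep.
  by rewrite (nat_L1 (leq_trans (kle : (k <= size l2)%N) sl2) Ep).
have LU : forall k, (k <= size l2)%N -> length_is Phi t (U k) (n2 - k).
  move=> k kle.
  have [q Hq] : exists q, length_is Phi t (U k) q.
    by apply: len_exists; exists (del_set (take k (rev l')) s2); split => //; apply: word_del.
  have up : (q <= n2 - k)%N.
    have := len_le Hq (word_del _ s2W) erefl.
    rewrite size_del_set ?size_takel ?size_rev ?sl' //.
      by rewrite take_uniq // rev_uniq.
    apply/allP => j /mem_take; rewrite mem_rev; exact: l'le.
  have lo : (n2.+1 - k <= q.+1)%N.
    have [v [vW sv Ev]] := len_word Hq.
    have cvW : is_word Phi t (c :: v) by apply/andP.
    rewrite -sv; apply: (len_le (LW k (leqW kle)) cvW).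
    by rewrite wprod_cons Ev WU.
  by rewrite -(nat_L2 (leq_trans kle sl2) up lo).
have U0 : U (size l2) = x.
  rewrite /U -sl' -(size_rev l') take_size Hx; apply: congr1; apply: eq_del_set => j _.
  by rewrite mem_rev.
have Wlast : W (size l2).+1 = x.
  by rewrite /W take_oversize ?size_rev.
have Hcx : covered Phi t x (refl c *m x).
  have := Hcov (size l2).+1; rewrite size_rev /= => /(_ (leqnn _)).
  by rewrite -/(W _) -/(W _) Wlast WU // U0.
have Hbx := covered_bstep Hcx.
have EdS : forall j, (0 < j)%N -> del_set [:: j.+1] (c :: s2) = c :: del_set [:: j] s2.
  by move=> j j0; rewrite del_set_cons inE eqSS eq_sym (negbTE (lt0n_neq0 j0)).
have Hlam : lam_spec Phi t x s2 l'.
  split => // j; split.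
    move=> jl; have j0 := L'0 j jl.
    have jl2 : j.+1 \in 1%N :: l2 by rewrite inE -memL' // jl orbT.
    have [_ Hle] := (lP j.+1).1 jl2.
    split; first exact: l'le.
    move: Hle; rewrite EdS // wprod_cons. exact: (proj2 (lift_iff _ cS Hbx)).
  move=> [/andP[j1 jn] Hle].
  have : j.+1 \in 1%N :: l2.
    apply/(lP j.+1); split; first by rewrite /= ltnS.
    by rewrite EdS // wprod_cons; apply: (proj1 (lift_iff _ cS Hbx)).
  by rewrite inE eqSS (negbTE (lt0n_neq0 j1)) /= -memL'.
split.
- exact: (proj1 Hcx).
- move=> b; rewrite Ew'.
  set w' := wprod s2 in Ew Ew' Lw' *.
  have w'W : in_W Phi t w' := len_inW Lw'.
  rewrite -wprod_tr -/w'.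
  set g := w'^T *m c.
  have gPhi : g \in Phi.
    by rewrite /g /w' wprod_tr; apply: wprod_root (word_rev s2W) cPhi.
  have w'g : w' *m g = c by rewrite /g mulmxA inW_orth' // mul1mx.
  have Erg : w' *m refl g = w.
    rewrite /g -refl_conj ?trmxK ?inW_orth' // !mulmxA inW_orth' // mul1mx.
    by rewrite Ew.
  have tc : 0 < dot t c by case/andP: (simple_pos cS).
  have gP : posroot Phi t g.
    apply: pos_of => //; apply/negP => Hneg.
    have Hn : dot t (w' *m - g) < 0 by rewrite mulmxN w'g dotNr oppr_lt0.
    case: (F5 Lw' (posN gPhi Hneg) Hn) => q []; rewrite reflN Erg => Hq lt.
    by have := len_uniq Hq Lw; move=> E; rewrite E /= ltnNge leqnSn in lt.
  have Ebw : forall b, b = w'^T *m (w' *m b).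
    by move=> b'; rewrite mulmxA inW_orth // mul1mx.
  have KS : posroot Phi t b ->
      (dot t (w' *m b) < 0 <-> (dot t (w *m b) < 0 /\ b <> g)).
    move=> bP; have bPhi : b \in Phi by case/andP: bP.
    have wbP : w' *m b \in Phi by apply: inW_root.
    rewrite Ew -mulmxA; split.
      move=> H; split; last first.
        by move=> E; move: H; rewrite E w'g => H'; have := lt_trans H' tc; rewrite ltxx.
      case: (eqVneq (- (w' *m b)) c) => [E | ne].
        have : b = - g by rewrite {1}(Ebw b) /g -E mulmxN opprK.
        move=> Eb; case/andP: bP => _; rewrite Eb dotNr oppr_gt0.
        by case/andP: gP => _ tg; rewrite ltNge (ltW tg).
      have := refl_simple_pos cS (posN wbP H) ne.
      by rewrite mulmxN dotNr oppr_gt0.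
    case=> H nb; case: (root_sign wbP) => // Hp.
    have ne : w' *m b != c.
      by apply/eqP => E; apply: nb; rewrite (Ebw b) E.
    have wbpos : posroot Phi t (w' *m b) by rewrite posrootP wbP Hp.
    have := refl_simple_pos cS wbpos ne => H'.
    by have := lt_trans H H'; rewrite ltxx.
  have BE : bruhat_le Phi t x (w' *m refl b) <-> bruhat_le Phi t x (w *m refl b).
    by rewrite Ew -mulmxA; apply: lift_iff.
  split.
    case=> bP Hle Hlt.
    have H := (inv_iff Lw' bP).1 Hlt.
    have [H1 H2] := (KS bP).1 H.
    split => //; split => //; first by apply/BE.
    exact: (proj2 (inv_iff Lw bP)).
  case=> [[bP Hle Hlt] nb].
  have H1 := (inv_iff Lw bP).1 Hlt.
  have H := (KS bP).2 (conj H1 nb).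
  split => //; first by apply/BE.
  exact: (proj2 (inv_iff Lw' bP)).
- split; first by split => //; rewrite Ew'.
  by exists l'; split.
- exact: Hlam.
split.
- by rewrite rev_uniq.
- by rewrite all_rev; apply/allP => j /l'le.
- move=> k /andP[k0 kle]; rewrite size_rev in kle.
  change (covered Phi t (U k) (U k.-1)).
  have kl2 : (k <= size l2)%N by rewrite -sl'.
  have kn2 : (k <= n2)%N := leq_trans kl2 sl2.
  have := Hcov k; rewrite size_rev /= k0 /= => /(_ (leqW kl2)) /covered_bstep.
  rewrite -/(W k) -/(W k.-1) => -[b [bP EW _]].
  have EU : U k.-1 = U k *m refl b.
    have := WU _ (leq_trans (leq_pred k) kl2); rewrite EW WU // => E.
    by rewrite -[U k.-1]mul1mx -(reflK cPhi) -mulmxA -E -mulmxA (mulmxA (refl c)) reflK // mul1mx.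
  have L1 := LU _ kl2.
  have L2 := LU _ (leq_trans (leq_pred k) kl2).
  split; last by exists (n2 - k)%N; split => //; rewrite -nat_L4.
  apply: bstep_lt; exists b; split => //.
  by exists (n2 - k)%N, (n2 - k.-1)%N; split => //; apply: nat_L3.
- rewrite Hx; congr wprod; apply: eq_del_set => j _; by rewrite mem_rev.
Qed.
End RS.

Theorem lemma5p3 (R : realFieldType) (m : nat) (Phi : seq 'cV[R]_m) (t : 'cV[R]_m)
  (HPhi : root_system Phi) (Ht : regular Phi t)
  (x w : 'M[R]_m) (s : seq 'cV[R]_m) (l : seq nat) :
  bruhat_lt Phi t x w ->
  reduced_word Phi t s w ->
  good_word Phi t x s ->
  lam_spec Phi t x s l ->
  chain_label Phi t x s (rev l) ->
  nth 0%N l 0 = 1%N ->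
  let a1 := head 0 s in
  let gamma1 := wprod (rev (behead s)) *m a1 in
  let l' := [seq i.-1 | i <- behead l] in
  [/\ bruhat_lt Phi t x (refl a1 *m x),
      (forall b, inS Phi t x (refl a1 *m w) b <-> (inS Phi t x w b /\ b <> gamma1)),
      reduced_word Phi t (behead s) (refl a1 *m w) /\ good_word Phi t x (behead s),
      lam_spec Phi t x (behead s) l' &
      chain_label Phi t x (behead s) (rev l')].
Proof. exact: (main_lemma HPhi Ht). Qed.
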